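(* Let $X$ be a connected, locally path connected space and $H\le\pi_1(X,x_0)$. If $X$ is homotopically Hausdorff relative to $H$, then $H$ is a closed subgroup of $\pi_1^{wh}(X,x_0)$.
   Context: $\pi_1^{wh}(X,x_0)$ is $\pi_1(X,x_0)$ with the whisker topology, having as basis the sets $[\alpha]\,i_*\pi_1(U,x_0)$ for $[\alpha]\in\pi_1(X,x_0)$ and $U$ an open neighborhood of $x_0$. $X$ is homotopically Hausdorff relative to $H$ if for every $g\in\pi_1(X,x_0)\setminus H$ and every path $\alpha$ from $x_0$ there is an open neighborhood $U$ of $\alpha(1)$ such that no loop $\gamma:(I,\partial I)\to(U,\alpha(1))$ satisfies $[\alpha*\gamma*\alpha^{-1}]\in Hg$. *)

(* Defs.v *)
From Stdlib Require Import Reals.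
Open Scope R_scope.

Record Topology (X : Type) := {
  is_open : (X -> Prop) -> Prop;
  open_full : is_open (fun _ => True);
  open_inter : forall U V, is_open U -> is_open V -> is_open (fun x => U x /\ V x);
  open_union : forall F : (X -> Prop) -> Prop,
      (forall U, F U -> is_open U) -> is_open (fun x => exists U, F U /\ U x)
}.
Arguments is_open {X} t _ : rename.

Definition inI (t : R) : Prop := 0 <= t <= 1.

Section Paths.
Context {X : Type} (T : Topology X).

(** A path is a map R -> X whose restriction to I is continuous (values
    outside I are irrelevant). *)
Definition is_path (p : R -> X) : Prop :=
  forall U, is_open T U -> forall t, inI t -> U (p t) ->
    exists d, 0 < d /\ forall s, inI s -> Rabs (s - t) < d -> U (p s).

Definition cont2 (F : R -> R -> X) : Prop :=
  forall U, is_open T U -> forall s t, inI s -> inI t -> U (F s t) ->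
    exists d, 0 < d /\ forall s' t', inI s' -> inI t' ->
      Rabs (s' - s) < d -> Rabs (t' - t) < d -> U (F s' t').

Definition path_homotopic (a b : R -> X) : Prop :=
  exists F : R -> R -> X, cont2 F /\
    (forall s, inI s -> F s 0 = a s) /\
    (forall s, inI s -> F s 1 = b s) /\
    (forall t, inI t -> F 0 t = a 0) /\
    (forall t, inI t -> F 1 t = a 1).

Definition is_loop (p : R -> X) (x : X) : Prop :=
  is_path p /\ p 0 = x /\ p 1 = x.

Definition is_loop_in (U : X -> Prop) (p : R -> X) (x : X) : Prop :=
  is_loop p x /\ forall s, inI s -> U (p s).

Definition concat (a b : R -> X) : R -> X :=
  fun s => if Rle_dec s (1/2) then a (2 * s) else b (2 * s - 1).

Definition rev (a : R -> X) : R -> X := fun s => a (1 - s).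

Definition connected_space : Prop :=
  forall U, is_open T U -> is_open T (fun x => ~ U x) ->
    (forall x, U x) \/ (forall x, ~ U x).

Definition path_connected_set (V : X -> Prop) : Prop :=
  forall a b, V a -> V b -> exists p, is_path p /\ p 0 = a /\ p 1 = b /\
    forall s, inI s -> V (p s).

Definition locally_path_connected : Prop :=
  forall x U, is_open T U -> U x ->
    exists V, is_open T V /\ V x /\ (forall y, V y -> U y) /\ path_connected_set V.

(** A subgroup H of pi_1(X,x0), represented by the set of loops whose
    classes lie in H (so H is saturated under path homotopy). *)
Definition is_pi1_subgroup (x0 : X) (H : (R -> X) -> Prop) : Prop :=
  (forall h, H h -> is_loop h x0) /\
  (forall a b, H a -> is_loop b x0 -> path_homotopic a b -> H b) /\
  H (fun _ => x0) /\
  (forall a b, H a -> H b -> H (concat a b)) /\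
  (forall a, H a -> H (rev a)).

Definition homotopically_hausdorff_rel (x0 : X) (H : (R -> X) -> Prop) : Prop :=
  forall g, is_loop g x0 -> ~ H g ->
  forall a, is_path a -> a 0 = x0 ->
    exists U, is_open T U /\ U (a 1) /\
      forall c, is_loop_in U c (a 1) ->
        ~ (exists h, H h /\
             path_homotopic (concat (concat a c) (rev a)) (concat h g)).

(** H is closed in pi_1^{wh}(X,x0): every class outside H has a basic
    neighbourhood [a] i_* pi_1(U,x0) (U open, x0 in U) disjoint from H. *)
Definition whisker_closed (x0 : X) (H : (R -> X) -> Prop) : Prop :=
  forall g, is_loop g x0 -> ~ H g ->
    exists a U, is_loop a x0 /\ is_open T U /\ U x0 /\
      (exists c, is_loop_in U c x0 /\ path_homotopic g (concat a c)) /\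
      (forall c, is_loop_in U c x0 -> ~ H (concat a c)).

End Paths.

(* Main.v *)
Require Import Defs.
From Stdlib Require Import Reals.
From Stdlib Require Import Lra Psatz FunctionalExtensionality.
Open Scope R_scope.

Lemma lip (s t s' t' d : R) : inI s -> inI t -> inI s' -> inI t' -> 0 < d ->
  Rabs (s' - s) < d -> Rabs (t' - t) < d ->
  Rabs (Rmin ((1+t')*s') 1 - Rmin ((1+t)*s) 1) < 3 * d.
Proof.
  unfold inI; intros [a1 a2] [b1 b2] [c1 c2] [e1 e2] Hd H1 H2.
  destruct (Rabs_def2 _ _ H1); destruct (Rabs_def2 _ _ H2).
  assert (E: -(3*d) < (1+t')*s' - (1+t)*s < 3*d) by (split; nra).
  unfold Rmin; destruct (Rle_dec _ 1); destruct (Rle_dec _ 1);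
  apply Rabs_def1; lra.
Qed.

Lemma comp_cont2 {X} (T : Topology X) (p : R -> X) (f : R -> R -> R) :
  is_path T p ->
  (forall s t, inI s -> inI t -> inI (f s t)) ->
  (forall s t e, inI s -> inI t -> 0 < e -> exists d, 0 < d /\
     forall s' t', inI s' -> inI t' -> Rabs (s' - s) < d -> Rabs (t' - t) < d ->
       Rabs (f s' t' - f s t) < e) ->
  cont2 T (fun s t => p (f s t)).
Proof.
  intros Hp Hf Hc U HU s t Hs Ht HUp.
  destruct (Hp U HU (f s t) (Hf s t Hs Ht) HUp) as [e [He He']].
  destruct (Hc s t e Hs Ht He) as [d [Hd Hd']].
  exists d; split; auto.
Qed.

Lemma refl_hom {X} (T : Topology X) (p : R -> X) :
  is_path T p -> path_homotopic T p p.
Proof.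
  intros Hp. exists (fun s t => p ((fun s t => s) s t)). repeat split; auto.
  apply comp_cont2; auto.
  intros s t e _ _ He. exists e; split; auto.
Qed.

Lemma rev_path {X} (T : Topology X) (p : R -> X) :
  is_path T p -> is_path T (rev p).
Proof.
  intros Hp U HU t Ht HUt. unfold rev in *.
  assert (inI (1 - t)) by (unfold inI in *; lra).
  destruct (Hp U HU (1 - t) H HUt) as [d [Hd Hd']].
  exists d; split; auto. intros s Hs Hst. apply Hd'.
  unfold inI in *; lra.
  replace (1 - s - (1 - t)) with (- (s - t)) by ring. rewrite Rabs_Ropp; auto.
Qed.

Lemma concat_path {X} (T : Topology X) (a b : R -> X) :
  is_path T a -> is_path T b -> a 1 = b 0 -> is_path T (concat a b).
Proof.
  intros Ha Hb Hab U HU t Ht HUt. unfold concat in *.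
  destruct (total_order_T t (1/2)) as [[Hlt|Heq]|Hgt].
  - destruct (Rle_dec t (1/2)); [|lra].
    assert (inI (2*t)) by (unfold inI in *; lra).
    destruct (Ha U HU (2*t) H HUt) as [d [Hd Hd']].
    exists (Rmin (d/2) (1/2 - t)); split.
    { apply Rmin_pos; lra. }
    intros s Hs Hst.
    pose proof (Rmin_l (d/2) (1/2 - t)); pose proof (Rmin_r (d/2) (1/2-t)).
    destruct (Rabs_def2 _ _ Hst).
    destruct (Rle_dec s (1/2)); [|lra].
    apply Hd'. unfold inI in *; lra. apply Rabs_def1; lra.
  - subst t. destruct (Rle_dec (1/2) (1/2)); [|lra].
    replace (2 * (1/2)) with 1 in HUt by field.
    assert (I1 : inI 1) by (unfold inI; lra).
    assert (I0 : inI 0) by (unfold inI; lra).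
    destruct (Ha U HU 1 I1 HUt) as [d1 [Hd1 Hd1']].
    rewrite Hab in HUt.
    destruct (Hb U HU 0 I0 HUt) as [d2 [Hd2 Hd2']].
    exists (Rmin d1 d2 / 2); split.
    { pose proof (Rmin_pos _ _ Hd1 Hd2); lra. }
    intros s Hs Hst.
    pose proof (Rmin_l d1 d2); pose proof (Rmin_r d1 d2).
    destruct (Rabs_def2 _ _ Hst).
    destruct (Rle_dec s (1/2)).
    + apply Hd1'. unfold inI in *; lra. apply Rabs_def1; lra.
    + apply Hd2'. unfold inI in *; lra. apply Rabs_def1; lra.
  - destruct (Rle_dec t (1/2)); [lra|].
    assert (inI (2*t-1)) by (unfold inI in *; lra).
    destruct (Hb U HU (2*t-1) H HUt) as [d [Hd Hd']].
    exists (Rmin (d/2) (t - 1/2)); split.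
    { apply Rmin_pos; lra. }
    intros s Hs Hst.
    pose proof (Rmin_l (d/2) (t - 1/2)); pose proof (Rmin_r (d/2) (t-1/2)).
    destruct (Rabs_def2 _ _ Hst).
    destruct (Rle_dec s (1/2)); [lra|].
    apply Hd'. unfold inI in *; lra. apply Rabs_def1; lra.
Qed.

Theorem proposition3p9 (X : Type) (T : Topology X) (x0 : X)
  (H : (R -> X) -> Prop) :
  connected_space T -> locally_path_connected T ->
  is_pi1_subgroup T x0 H ->
  homotopically_hausdorff_rel T x0 H ->
  whisker_closed T x0 H.
Proof.
  intros _ _ [Hloop [Hsat [Hc [Hcat Hrev]]]] HH g Hg HgH.
  destruct Hg as [Hgp [Hg0 Hg1]].
  assert (Hrg : is_loop T (rev g) x0).
  { split; [apply rev_path; auto|unfold rev; split].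
    replace (1-0) with 1 by ring; auto. replace (1-1) with 0 by ring; auto. }
  assert (HrgH : ~ H (rev g)).
  { intro Hr. apply HgH. apply Hrev in Hr.
    replace g with (rev (rev g)); auto.
    apply functional_extensionality; intro s; unfold rev; f_equal; ring. }
  destruct (HH (rev g) Hrg HrgH g Hgp Hg0) as [U [HU [HU1 HUc]]].
  rewrite Hg1 in HU1, HUc.
  assert (Hk : is_loop_in T U (fun _ => x0) x0).
  { repeat split; auto. intros V _ t _ HV. exists 1; split; [lra|auto]. }
  exists g, U. repeat split; auto.
  - exists (fun _ => x0). split; auto.
    exists (fun s t => g ((fun s t => Rmin ((1+t)*s) 1) s t)). repeat split.
    + apply comp_cont2; auto.
      * intros s t Hs Ht; unfold inI in *. unfold Rmin.
        destruct (Rle_dec _ 1); nra.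
      * intros s t e Hs Ht He. exists (e/3); split; [lra|].
        intros s' t' Hs' Ht' H1 H2.
        replace e with (3 * (e/3)) by field. apply lip; auto; lra.
    + intros s Hs; simpl. unfold inI in Hs. f_equal.
      unfold Rmin; destruct (Rle_dec _ 1); lra.
    + intros s Hs; simpl. unfold concat, inI in *.
      destruct (Rle_dec s (1/2)).
      * f_equal. unfold Rmin; destruct (Rle_dec _ 1); lra.
      * rewrite <- Hg1. f_equal. unfold Rmin; destruct (Rle_dec _ 1); lra.
    + intros t Ht; simpl. f_equal. unfold Rmin; destruct (Rle_dec _ 1); lra.
    + intros t Ht; simpl. unfold inI in Ht. f_equal.
      unfold Rmin; destruct (Rle_dec _ 1); lra.
  - intros c Hcin HgcH. apply (HUc c Hcin).
    exists (concat g c). split; auto.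
    apply refl_hom. apply concat_path.
    + destruct (Hloop _ HgcH) as [P _]; exact P.
    + apply rev_path; auto.
    + destruct (Hloop _ HgcH) as [_ [_ P]]. rewrite P. unfold rev.
      replace (1-0) with 1 by ring; auto.
Qed.
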